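(* Let $G=(V,E)$ be a finite connected graph with boundary $\partial G\subset V$, let $\alpha\in\Pi(\partial G)$, $p\in[0,1]$, $q>0$. Let $\widetilde E\subset E$ be such that for every $e\in\widetilde E$ there exists a path in $G\cup\alpha$ connecting the two endpoints of $e$ and using only edges of $E\setminus\widetilde E$. Let $\Gamma_{\widetilde E}(e)$ be the collection of such paths, and for $e\in\widetilde E$ set \[\widetilde\varepsilon_e:=|p'-p|\;\mathbb P^G_{\min(p,p')}\big(\exists\gamma\in\Gamma_{\widetilde E}(e)\text{ such that all edges of }\gamma\text{ are open}\big).\] Then: (1) if $p<p'$, then $\phi^\alpha_{G,p,q}\preceq\mathbb P^G_{(p'-\widetilde\varepsilon_e\mathbf 1_{e\in\widetilde E})_e}$; (2) if $p>p'$, then $\mathbb P^G_{(p'+\widetilde\varepsilon_e\mathbf 1_{e\in\widetilde E})_e}\preceq\phi^\alpha_{G,p,q}$.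
   Context: Configurations are $\omega\in\{0,1\}^E$; an edge $e$ is open if $\omega(e)=1$, closed otherwise. $\Pi(\partial G)$ denotes the set of partitions of $\partial G$; vertices in the same block of $\alpha$ are called wired. $G\cup\alpha$ is the (multi)graph obtained from $G$ by identifying wired vertices. $k(\omega,\alpha)$ is the number of connected components of the graph with vertex set $V$ and edge set the open edges of $\omega$, after identifying wired vertices. The FK measure is $\phi^\alpha_{G,p,q}(\omega)=Z^{-1}\big(\prod_{e\in E}p^{\omega(e)}(1-p)^{1-\omega(e)}\big)q^{k(\omega,\alpha)}$. Set $p':=\frac{p}{p+q(1-p)}$. $\mathbb P^G_{(p_e)}$ is the product measure on $\{0,1\}^E$ where edge $e$ is open independently with probability $p_e$ ($\mathbb P^G_s$ when $p_e\equiv s$). $\mu\preceq\mu'$ means $\mu(A)\le\mu'(A)$ for all increasing events $A$. *)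

(* Defs.v *)
From HB Require Import structures.
From mathcomp Require Import all_boot all_order all_algebra.
Set Implicit Arguments. Unset Strict Implicit. Unset Printing Implicit Defensive.
Import Order.TTheory GRing.Theory Num.Theory.
Local Open Scope ring_scope.

(* A finite (multi)graph: vertex type V, edge type E, endpoints [ends e].
   Configurations are finite functions E -> bool (true = open). *)

Section FK.
Variables (V E : finType) (ends : E -> V * V).

Definition joins (e : E) (x y : V) : bool :=
  (((ends e).1 == x) && ((ends e).2 == y)) || (((ends e).1 == y) && ((ends e).2 == x)).

Definition adj : rel V := fun x y => [exists e, joins e x y].

Definition graph_connected : Prop := forall x y : V, connect adj x y.

Definition wired (alpha : {set {set V}}) (x y : V) : bool :=
  [exists A in alpha, (x \in A) && (y \in A)].

(* x and y are the same vertex of G ∪ alpha *)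
Definition same_vertex (alpha : {set {set V}}) (x y : V) : bool :=
  (x == y) || wired alpha x y.

Definition open_rel (alpha : {set {set V}}) (w : {ffun E -> bool}) : rel V :=
  fun x y => [exists e, w e && joins e x y] || wired alpha x y.

Definition kcomp (alpha : {set {set V}}) (w : {ffun E -> bool}) : nat :=
  #|[set [set y | connect (open_rel alpha w) x y] | x : V]|.

(* s is (the edge sequence of) a path in G ∪ alpha from x to y *)
Fixpoint walk (alpha : {set {set V}}) (x y : V) (s : seq E) : bool :=
  match s with
  | [::] => same_vertex alpha x y
  | e :: s' => (same_vertex alpha x (ends e).1 && walk alpha (ends e).2 y s')
            || (same_vertex alpha x (ends e).2 && walk alpha (ends e).1 y s')
  end.

Definition in_Gamma (alpha : {set {set V}}) (Et : {set E}) (e : E) (s : seq E) : bool :=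
  walk alpha (ends e).1 (ends e).2 s && all (fun f => f \notin Et) s.

(* event {exists γ ∈ Γ_{Et}(e) with all edges open}; paths restricted to
   edge-simple ones (which is no loss for existence) so the event is decidable *)
Definition Gamma_open_event (alpha : {set {set V}}) (Et : {set E}) (e : E)
  : {set {ffun E -> bool}} :=
  [set w : {ffun E -> bool} | [exists n : 'I_(#|E|).+1, exists t : n.-tuple E,
              [&& uniq t, in_Gamma alpha Et e t & all (fun f => w f) t]]].

Variable R : realFieldType.

Definition edge_weight (pe : E -> R) (w : {ffun E -> bool}) : R :=
  \prod_(e : E) (if w e then pe e else 1 - pe e).

Definition prodP (pe : E -> R) (A : {set {ffun E -> bool}}) : R :=
  \sum_(w in A) edge_weight pe w.

Definition FK_weight (alpha : {set {set V}}) (p q : R) (w : {ffun E -> bool}) : R :=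
  edge_weight (fun _ => p) w * q ^+ kcomp alpha w.

Definition FK (alpha : {set {set V}}) (p q : R) (A : {set {ffun E -> bool}}) : R :=
  (\sum_(w in A) FK_weight alpha p q w) / (\sum_(w : {ffun E -> bool}) FK_weight alpha p q w).

Definition increasing (A : {set {ffun E -> bool}}) : Prop :=
  forall w w' : {ffun E -> bool}, w \in A -> (forall e, w e ==> w' e) -> w' \in A.

Definition dominated (mu nu : {set {ffun E -> bool}} -> R) : Prop :=
  forall A, increasing A -> mu A <= nu A.

Definition eps_tilde (alpha : {set {set V}}) (Et : {set E}) (p p' : R) (e : E) : R :=
  `|p' - p| * prodP (fun _ => Num.min p p') (Gamma_open_event alpha Et e).

End FK.

Definition pprime (R : realFieldType) (p q : R) : R := p / (p + q * (1 - p)).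

(* Main.v *)
Require Import Defs.
From HB Require Import structures.
From mathcomp Require Import all_boot all_order all_algebra.
From mathcomp Require Import ring lra.
Import Order.TTheory GRing.Theory Num.Theory.
Set Implicit Arguments. Unset Strict Implicit. Unset Printing Implicit Defensive.
Local Open Scope ring_scope.

Section Gen.
Variables (E : finType) (R : realFieldType).
Local Notation cfg := {ffun E -> bool}.

Definition upd (w : cfg) (e : E) (b : bool) : cfg :=
  [ffun f => if f == e then b else w f].
Definition sim (s : seq E) (w x : cfg) : bool :=
  [forall f, (f \notin s) ==> (w f == x f)].
Definition wt (r : E -> R) (f : E) (b : bool) : R := if b then r f else 1 - r f.
Fixpoint Rs (r : E -> R) (s : seq E) (F : cfg -> R) (w : cfg) : R :=
  match s with
  | [::] => F w
  | e :: s' => r e * Rs r s' F (upd w e true) + (1 - r e) * Rs r s' F (upd w e false)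
  end.
Definition mono (F : cfg -> R) :=
  forall w w' : cfg, (forall e, w e ==> w' e) -> F w <= F w'.

Lemma upd_same w e b : upd w e b e = b.
Proof. by rewrite ffunE eqxx. Qed.
Lemma upd_other w e b f : f != e -> upd w e b f = w f.
Proof. by rewrite ffunE => /negbTE ->. Qed.
Lemma upd_id w e : upd w e (w e) = w.
Proof. by apply/ffunP => f; rewrite ffunE; case: eqP => // ->. Qed.
Lemma upd_comm w e f b c : f != e -> upd (upd w e b) f c = upd (upd w f c) e b.
Proof.
move=> fe; apply/ffunP => g; rewrite !ffunE.
case: (eqVneq g f) => [->|gf]; first by rewrite (negbTE fe).
by [].
Qed.

Lemma sim_at s w x f : sim s w x -> f \notin s -> x f = w f.
Proof. by move=> /forallP /(_ f) /implyP H /H /eqP ->. Qed.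

Lemma sim_nil w x : sim [::] w x = (x == w).
Proof.
apply/forallP/eqP => [H|->]; last by move=> f; rewrite eqxx implybT.
by apply/ffunP => f; have := H f; rewrite in_nil /= => /eqP.
Qed.

Lemma sim_upd s w x e b : sim (e :: s) w x -> sim s (upd w e b) (upd x e b).
Proof.
move=> H; apply/forallP => f; apply/implyP => fs; rewrite !ffunE.
case: (eqVneq f e) => [_|fe] //.
by rewrite (sim_at H) // in_cons negb_or fe.
Qed.

Lemma sim_consb s w x e b : e \notin s ->
  (sim (e :: s) w x && (x e == b)) = sim s (upd w e b) x.
Proof.
move=> es; apply/andP/forallP => [[H /eqP xe] f | H].
- apply/implyP => fs; rewrite ffunE; case: (eqVneq f e) => [->|fe]; first by rewrite xe.
  by rewrite (sim_at H) // in_cons negb_or fe.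
- split.
  + apply/forallP => f; apply/implyP; rewrite in_cons negb_or => /andP [fe fs].
    by have := implyP (H f) fs; rewrite ffunE (negbTE fe).
  + by have := implyP (H e) es; rewrite ffunE eqxx eq_sym.
Qed.

Lemma split_sim s w e (G : cfg -> R) : e \notin s ->
  \sum_(x | sim (e :: s) w x) G x =
  \sum_(x | sim s (upd w e true) x) G x + \sum_(x | sim s (upd w e false) x) G x.
Proof.
move=> es; rewrite (bigID (fun x : cfg => x e)) /=; congr (_ + _); apply: eq_bigl => x.
- by rewrite -(@sim_consb s w x e true es) eqb_id.
- by rewrite -(@sim_consb s w x e false es) eqbF_neg.
Qed.

Lemma reindex_upd s e w b (G : cfg -> R) : e \notin s ->
  \sum_(x | sim s (upd w e b) x) G x = \sum_(x | sim s w x) G (upd x e b).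
Proof.
move=> es.
pose h (x : cfg) : cfg := [ffun f => if f == e then x f (+) (w e (+) b) else x f].
have hK : involutive h.
  by move=> x; apply/ffunP=> f; rewrite !ffunE; case: eqP => // _; rewrite addbK.
rewrite (reindex_inj (inv_inj hK)); apply: eq_big => x.
- rewrite /sim; apply: eq_forallb => f; rewrite !ffunE.
  case: (eqVneq f e) => [->|_] //; rewrite es /=; clear hK h; by case: b; case: (x e); case: (w e).
- move=> Hx; congr (G _); apply/ffunP => f; rewrite /h !ffunE; case: (eqVneq f e) => [->|//].
  by have := sim_at Hx es; rewrite /h !ffunE !eqxx.
Qed.

Lemma Rs_sim r s F w x : sim s w x -> Rs r s F w = Rs r s F x.
Proof.
elim: s w x => [|e s IH] w x /=; first by rewrite sim_nil => /eqP ->.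
by move=> H; rewrite (IH _ _ (sim_upd true H)) (IH _ _ (sim_upd false H)).
Qed.

Lemma Rs_ext r s F G : F =1 G -> Rs r s F =1 Rs r s G.
Proof. by move=> FG; elim: s => [|e s IH] w //=; rewrite !IH. Qed.

Lemma Rs_const r s c w : Rs r s (fun _ => c) w = c.
Proof. by elim: s w => [|e s IH] w //=; rewrite !IH; ring. Qed.

Lemma Rs_cat r a b F w : Rs r (a ++ b) F w = Rs r a (Rs r b F) w.
Proof. by elim: a w => [|e a IH] w //=; rewrite !IH. Qed.

Lemma Rs_dep r s (Y : pred E) (F : cfg -> R) :
  (forall w x : cfg, (forall f, Y f -> w f = x f) -> F w = F x) ->
  forall w x : cfg, (forall f, Y f -> w f = x f) -> Rs r s F w = Rs r s F x.
Proof.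
move=> HF; elim: s => [|e s IH] w x H /=; first exact: HF.
have Hb : forall b f, Y f -> upd w e b f = upd x e b f.
  by move=> b f Yf; rewrite !ffunE; case: (f == e) => //; exact: H.
by rewrite (IH _ _ (Hb true)) (IH _ _ (Hb false)).
Qed.

Lemma upd_le (w w' : cfg) e b : (forall f, w f ==> w' f) -> forall f, upd w e b f ==> upd w' e b f.
Proof. by move=> H f; rewrite !ffunE; case: (f == e); [rewrite implybb | apply: H]. Qed.

Lemma Rs_mono r s F : (forall e, 0 <= r e <= 1) -> mono F -> mono (Rs r s F).
Proof.
move=> r01 mF; elim: s => [|e s IH] w w' H //=; first exact: mF.
have /andP [r0 r1] := r01 e.
apply: lerD; apply: ler_wpM2l; rewrite ?subr_ge0 //; apply: IH; exact: upd_le.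
Qed.

Lemma Rs_bounds r s F w : (forall e, 0 <= r e <= 1) -> (forall x, 0 <= F x <= 1) ->
  0 <= Rs r s F w <= 1.
Proof.
move=> r01 F01; elim: s w => [|e s IH] w //=.
have /andP [r0 r1] := r01 e.
have /andP [a0 a1] := IH (upd w e true); have /andP [b0 b1] := IH (upd w e false).
apply/andP; split; nra.
Qed.

Lemma Rs_explicit r s F w : uniq s ->
  Rs r s F w = \sum_(x | sim s w x) (\prod_(f <- s) wt r f (x f)) * F x.
Proof.
elim: s w => [|e s IH] w /=.
  move=> _; rewrite (big_pred1 w) ?big_nil ?mul1r // => x; by rewrite sim_nil.
move=> /andP [es us]; rewrite split_sim // !IH // !big_distrr /=.
congr (_ + _); apply: eq_bigr => x Hx; rewrite big_cons (sim_at Hx es) upd_same /wt /=;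
  by rewrite mulrA.
Qed.

Lemma Rs_full r s F w : uniq s -> (forall f, f \in s) ->
  Rs r s F w = \sum_(x : cfg) (\prod_f wt r f (x f)) * F x.
Proof.
move=> us alls; rewrite Rs_explicit //.
apply: eq_big => x.
  by apply/forallP => f; rewrite alls.
move=> _; rewrite big_uniq //; congr (_ * _); apply: eq_bigl => f; by rewrite alls.
Qed.

Lemma Rs_indep r s (F : cfg -> R) w : uniq s ->
  (forall w x : cfg, (forall f, f \in s -> w f = x f) -> F w = F x) ->
  Rs r s F w = \sum_(x : cfg) (\prod_f wt r f (x f)) * F x.
Proof.
move=> us HF.
pose b := [seq f <- enum E | f \notin s].
have ub : uniq (b ++ s).
  rewrite cat_uniq us filter_uniq ?enum_uniq //= andbT.
  by apply/hasPn => f fs; rewrite mem_filter fs.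
rewrite -(Rs_full r F w ub); last first.
  by move=> f; rewrite mem_cat mem_filter mem_enum andbT; case: (f \in s).
rewrite Rs_cat.
have cst : forall x, Rs r s F x = Rs r s F w.
  move=> x; pose y : cfg := [ffun f => if f \in s then w f else x f].
  rewrite (@Rs_sim r s F x y); last first.
    by apply/forallP => f; apply/implyP => fs; rewrite ffunE (negbTE fs).
  apply: (@Rs_dep r s (fun f => f \in s) F HF) => f fs.
  by rewrite ffunE fs.
by rewrite (@Rs_ext r b (Rs r s F) (fun _ => Rs r s F w) cst w) Rs_const.
Qed.

Definition cano (s : seq E) (w : cfg) : cfg := [ffun f => if f \in s then false else w f].
Lemma sim_cano s w x : sim s w x = (cano s w == cano s x).
Proof.
apply/forallP/eqP => [H | H].
- apply/ffunP => f; rewrite !ffunE; case: ifP => // /negbT fs.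
  exact: (eqP (implyP (H f) fs)).
- move=> f; apply/implyP => fs; move/ffunP: H => /(_ f); rewrite !ffunE (negbTE fs) => ->.
  by [].
Qed.
Lemma cano_id s w : cano s (cano s w) = cano s w.
Proof. by apply/ffunP => f; rewrite !ffunE; case: (f \in s). Qed.

Lemma fiber_sum s (D K : cfg -> R) : (forall w, 0 <= D w) ->
  (forall w x, sim s w x -> D w = D x) ->
  (forall w, \sum_(x | sim s w x) K x <= 0) -> \sum_w D w * K w <= 0.
Proof.
move=> D0 Dc Kc.
rewrite (partition_big (cano s) predT) //=.
apply: sumr_le0 => j _.
case: (boolP (cano s j == j)) => cj.
- have -> : \sum_(w | cano s w == j) D w * K w = D j * \sum_(w | sim s j w) K w.
    rewrite big_distrr; apply: eq_big => w.
      by rewrite sim_cano (eqP cj) eq_sym.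
    move=> /eqP cw; congr (_ * _); apply: Dc; by rewrite sim_cano cw (eqP cj).
  by apply: mulr_ge0_le0.
- rewrite big_pred0 // => w; apply/negbTE/eqP => cw.
  by move: cj; rewrite -cw cano_id eqxx.
Qed.

Lemma step_id (W : cfg -> R) r s e F :
  \sum_w W w * Rs r s F w - \sum_w W w * Rs r (e :: s) F w =
  \sum_w (Rs r s F (upd w e true) - Rs r s F (upd w e false)) *
         (W w * (if w e then 1 - r e else - r e)).
Proof.
rewrite -sumrB; apply: eq_bigr => w _ /=.
have -> : Rs r s F w = Rs r s F (upd w e (w e)) by rewrite upd_id.
by case: (w e); ring.
Qed.

Lemma fiberK (W : cfg -> R) (r : R) s e w : e \notin s ->
  \sum_(x | sim (e :: s) w x) (W x * (if x e then 1 - r else - r)) =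
  \sum_(x | sim s w x) ((1 - r) * W (upd x e true) - r * W (upd x e false)).
Proof.
move=> es; rewrite split_sim // !reindex_upd // -big_split /=.
by apply: eq_bigr => x _; rewrite !upd_same; ring.
Qed.

Definition CU (W : cfg -> R) r s e := forall w,
  \sum_(x | sim s w x) ((1 - r e) * W (upd x e true) - r e * W (upd x e false)) <= 0.
Definition CL (W : cfg -> R) r s e := forall w,
  \sum_(x | sim s w x) (r e * W (upd x e false) - (1 - r e) * W (upd x e true)) <= 0.
Fixpoint condU W r s : Prop :=
  match s with [::] => True | e :: s' => CU W r s' e /\ condU W r s' end.
Fixpoint condL W r s : Prop :=
  match s with [::] => True | e :: s' => CL W r s' e /\ condL W r s' end.

Lemma D_props r s e F : (forall e, 0 <= r e <= 1) -> mono F ->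
  (forall w, 0 <= Rs r s F (upd w e true) - Rs r s F (upd w e false)) /\
  (forall w x, sim (e :: s) w x ->
     Rs r s F (upd w e true) - Rs r s F (upd w e false) =
     Rs r s F (upd x e true) - Rs r s F (upd x e false)).
Proof.
move=> r01 mF; split.
- move=> w; rewrite subr_ge0; apply: Rs_mono => // f; rewrite !ffunE.
  by case: eqP => // _; case: (w f).
- by move=> w x H; rewrite (Rs_sim r F (sim_upd true H)) (Rs_sim r F (sim_upd false H)).
Qed.

Lemma hybridU W r s F : (forall e, 0 <= r e <= 1) -> uniq s -> mono F -> condU W r s ->
  \sum_w W w * F w <= \sum_w W w * Rs r s F w.
Proof.
move=> r01; elim: s => [|e s IH] //= /andP [es us] mF [Ce Cs].
apply: le_trans (IH us mF Cs) _.
rewrite -subr_le0 step_id.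
have [D0 Dc] := @D_props r s e F r01 mF.
apply: (fiber_sum (s := e :: s)) => // w.
by rewrite fiberK //; apply: Ce.
Qed.

Lemma hybridL W r s F : (forall e, 0 <= r e <= 1) -> uniq s -> mono F -> condL W r s ->
  \sum_w W w * Rs r s F w <= \sum_w W w * F w.
Proof.
move=> r01; elim: s => [|e s IH] //= /andP [es us] mF [Ce Cs].
apply: le_trans _ (IH us mF Cs).
rewrite -subr_le0 -opprB step_id -sumrN.
have [D0 Dc] := @D_props r s e F r01 mF.
under eq_bigr do rewrite -mulrN.
apply: (fiber_sum (s := e :: s)) => // w.
rewrite sumrN fiberK // -sumrN.
under eq_bigr do rewrite opprB.
exact: Ce.
Qed.

Lemma condU_pw W r s : (forall e, e \in s -> forall x, (1 - r e) * W (upd x e true) <= r e * W (upd x e false)) ->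
  condU W r s.
Proof.
elim: s => [|e s IH] //= H; split.
- by move=> w; apply: sumr_le0 => x _; rewrite subr_le0; apply: H; rewrite in_cons eqxx.
- by apply: IH => f fs; apply: H; rewrite in_cons fs orbT.
Qed.

Lemma condL_pw W r s : (forall e, e \in s -> forall x, r e * W (upd x e false) <= (1 - r e) * W (upd x e true)) ->
  condL W r s.
Proof.
elim: s => [|e s IH] //= H; split.
- by move=> w; apply: sumr_le0 => x _; rewrite subr_le0; apply: H; rewrite in_cons eqxx.
- by apply: IH => f fs; apply: H; rewrite in_cons fs orbT.
Qed.

Lemma sim_upd_in s w x f b : f \in s -> sim s w (upd x f b) = sim s w x.
Proof.
move=> fs; apply: eq_forallb => g; rewrite ffunE.
case: (eqVneq g f) => [->|//]; by rewrite fs.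
Qed.

Lemma fiber_dom (V : cfg -> R) (m : R) s w (F : cfg -> R) : 0 <= m <= 1 -> uniq s -> mono F ->
  (forall w x : cfg, (forall f, f \in s -> w f = x f) -> F w = F x) ->
  (forall f, f \in s -> forall x, m * V (upd x f false) <= (1 - m) * V (upd x f true)) ->
  (\sum_(x : cfg) (\prod_f wt (fun _ => m) f (x f)) * F x) * \sum_(x | sim s w x) V x <=
  \sum_(x | sim s w x) F x * V x.
Proof.
move=> m01 us mF HF HV.
pose V' (x : cfg) := (sim s w x)%:R * V x.
have r01 : forall e : E, 0 <= (fun _ => m) e <= 1 by [].
have := @hybridL V' (fun _ => m) s F r01 us mF.
have cL : condL V' (fun _ => m) s.
  apply: condL_pw => f fs x; rewrite /V' !sim_upd_in //.
  case: (sim s w x); rewrite ?mul1r ?mul0r ?mulr0 //; exact: HV.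
move=> /(_ cL).
rewrite (eq_bigr (fun x => V' x * \sum_(x : cfg) (\prod_f wt (fun _ => m) f (x f)) * F x)); last first.
  by move=> x _; rewrite (Rs_indep _ _ us HF).
rewrite -big_distrl /= mulrC.
have -> : \sum_(x : cfg) V' x = \sum_(x | sim s w x) V x.
  by rewrite [RHS]big_mkcond; apply: eq_bigr => x _; rewrite /V'; case: (sim s w x); rewrite ?mul1r ?mul0r.
have -> : \sum_(x : cfg) V' x * F x = \sum_(x | sim s w x) F x * V x.
  by rewrite [RHS]big_mkcond; apply: eq_bigr => x _; rewrite /V'; case: (sim s w x); rewrite ?mul1r ?mul0r // mulrC.
by [].
Qed.

End Gen.

Section Cat.
Variables (E : finType) (R : realFieldType).
Lemma condU_cat (W : {ffun E -> bool} -> R) r (a b : seq E) : condU W r b ->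
  (forall e s, e \in a -> e \notin s -> uniq s -> {subset b <= s} -> CU W r s e) ->
  uniq (a ++ b) -> condU W r (a ++ b).
Proof.
move=> Cb; elim: a => [|e a IH] //= H /andP [ea u]; split.
- apply: H => //; [by rewrite in_cons eqxx | by move=> f fb; rewrite mem_cat fb orbT].
- by apply: IH u => f s fa; apply: H; rewrite in_cons fa orbT.
Qed.
Lemma condL_cat (W : {ffun E -> bool} -> R) r (a b : seq E) : condL W r b ->
  (forall e s, e \in a -> e \notin s -> uniq s -> {subset b <= s} -> CL W r s e) ->
  uniq (a ++ b) -> condL W r (a ++ b).
Proof.
move=> Cb; elim: a => [|e a IH] //= H /andP [ea u]; split.
- apply: H => //; [by rewrite in_cons eqxx | by move=> f fb; rewrite mem_cat fb orbT].
- by apply: IH u => f s fa; apply: H; rewrite in_cons fa orbT.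
Qed.
End Cat.

Local Close Scope ring_scope.

Section Rel.
Variable V : finType.
Definition cls (rr : rel V) x := [set y | connect rr x y].
Definition ncls (rr : rel V) := #|[set cls rr x | x : V]|.
Definition hU (rr : rel V) (C : {set V}) := \bigcup_(x in C) cls rr x.

Lemma cls_eq rr x y : symmetric rr -> connect rr x y -> cls rr x = cls rr y.
Proof.
move=> /sym_connect_sym cs cxy; apply/setP => z; rewrite !inE; apply/idP/idP => H.
- by apply: connect_trans H; rewrite cs.
- exact: connect_trans cxy H.
Qed.

Lemma hU_cls r0 r1 x : subrel r0 r1 -> hU r1 (cls r0 x) = cls r1 x.
Proof.
move=> sub; apply/setP => z; apply/bigcupP/idP.
- move=> [y]; rewrite !inE => c0 c1; apply: connect_trans c1.
  by apply: connect_sub c0 => u v /sub; apply: connect1.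
- by move=> H; exists x; rewrite // inE connect0.
Qed.

Lemma S1_eq r0 r1 : subrel r0 r1 -> [set cls r1 x | x : V] = hU r1 @: [set cls r0 x | x : V].
Proof.
move=> sub; rewrite -imset_comp; apply: eq_imset => x /=; by rewrite hU_cls.
Qed.

Lemma ncls_sub r0 r1 : subrel r0 r1 -> (ncls r1 <= ncls r0)%N.
Proof. by move=> sub; rewrite /ncls (S1_eq sub) leq_imset_card. Qed.

Lemma ncls_eq r0 r1 : connect r0 =2 connect r1 -> ncls r0 = ncls r1.
Proof.
move=> H; rewrite /ncls (@eq_imset _ _ (cls r0) (cls r1)) // => x; apply/setP => y.
by rewrite !inE H.
Qed.

Lemma key_path (r0 r1 : rel V) (a b x y : V) : symmetric r0 ->
  (forall x y, r1 x y -> [|| r0 x y, (x == a) && (y == b) | (x == b) && (y == a)]) ->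
  connect r1 x y -> connect r0 x y \/
    ((connect r0 x a || connect r0 x b) && (connect r0 y a || connect r0 y b)).
Proof.
move=> /sym_connect_sym cs split /connectP [p pth ->] {y}.
elim: p x pth => [|z p IH] x /=; first by left; exact: connect0.
move=> /andP [rxz pth]; have := IH z pth; set y := last z p.
have [H|H] : connect r0 x z \/ ((x == a) && (z == b) || (x == b) && (z == a)).
  by case/or3P: (split _ _ rxz) => H; [left; apply: connect1 | right; rewrite H | right; rewrite H orbT].
- case=> [c|/andP [A B]]; first by left; exact: connect_trans H c.
  right; rewrite B andbT; case/orP: A => A.
  + by rewrite (connect_trans H A).
  + by rewrite (connect_trans H A) orbT.
- case/orP: H => /andP [/eqP xa /eqP zb]; subst x z.
  + case=> [c|/andP [A B]]; right; last by rewrite connect0 B.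
    by rewrite connect0 /= (cs y b) c orbT.
  + case=> [c|/andP [A B]]; right; last by rewrite connect0 orbT B.
    by rewrite connect0 orbT /= (cs y a) c.
Qed.

Lemma ncls_add1 (r0 r1 : rel V) (a b : V) : symmetric r0 -> subrel r0 r1 ->
  (forall x y, r1 x y -> [|| r0 x y, (x == a) && (y == b) | (x == b) && (y == a)]) ->
  (ncls r0 <= (ncls r1).+1)%N.
Proof.
move=> s0 sub split; have cs := sym_connect_sym s0.
rewrite /ncls (S1_eq sub).
set S0 := [set cls r0 x | x : V].
have hb : cls r0 b \in S0 by apply/imsetP; exists b.
rewrite (cardsD1 (cls r0 b) S0) hb add1n ltnS.
have inj : {in S0 :\ cls r0 b &, injective (hU r1)}.
  move=> C1 C2 /setD1P [n1 /imsetP [x _ E1]] /setD1P [n2 /imsetP [y _ E2]]; subst C1 C2.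
  rewrite !hU_cls // => e1.
  have : y \in cls r1 x by rewrite e1 inE connect0.
  rewrite inE => cxy.
  case: (key_path s0 split cxy) => [c|/andP [A B]]; first exact: cls_eq.
  have nb : forall u, cls r0 u != cls r0 b -> ~~ connect r0 u b.
    by move=> u nu; apply: contra nu => c; apply/eqP/cls_eq.
  move: A B; rewrite (negbTE (nb _ n1)) (negbTE (nb _ n2)) !orbF => A B.
  by apply: cls_eq => //; apply: connect_trans A _; rewrite cs.
rewrite -(card_in_imset inj); apply: subset_leq_card; apply: imsetS; exact: subsetDl.
Qed.
End Rel.

Section GraphFK.
Variables (V E : finType) (ends : E -> V * V) (alpha : {set {set V}}).
Local Notation cfg := {ffun E -> bool}.
Local Notation orel := (open_rel ends alpha).

Lemma wired_sym x y : wired alpha x y = wired alpha y x.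
Proof.
by apply/existsP/existsP => [[A HA]|[A HA]]; exists A; move: HA;
  rewrite [(x \in A) && _]andbC.
Qed.

Lemma open_rel_sym w : symmetric (orel w).
Proof.
move=> x y; rewrite /open_rel wired_sym; congr (_ || _); apply: eq_existsb => e.
by rewrite /joins orbC.
Qed.

Lemma open_sub w e : subrel (orel (upd w e false)) (orel (upd w e true)).
Proof.
move=> x y /orP [/existsP [f /andP [wf jf]] | wd]; apply/orP; last by right.
left; apply/existsP; exists f; rewrite jf andbT; move: wf; rewrite !ffunE.
by case: (f == e).
Qed.

Lemma open_split w e x y : orel (upd w e true) x y ->
  [|| orel (upd w e false) x y, (x == (ends e).1) && (y == (ends e).2)
    | (x == (ends e).2) && (y == (ends e).1)].
Proof.
move=> /orP [/existsP [f /andP [wf jf]] | wd]; last by rewrite /open_rel wd orbT.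
case: (eqVneq f e) => [fe|fe].
- subst f; apply/orP; right; move: jf; rewrite /joins.
  by case/orP => /andP [/eqP -> /eqP ->]; rewrite !eqxx ?orbT.
- apply/orP; left; apply/orP; left; apply/existsP; exists f; rewrite jf andbT.
  by move: wf; rewrite !ffunE (negbTE fe).
Qed.

Lemma kcompE w : kcomp ends alpha w = ncls (orel w).
Proof. by []. Qed.

Lemma k_le1 w e : (kcomp ends alpha (upd w e true) <= kcomp ends alpha (upd w e false))%N.
Proof. rewrite !kcompE; apply: ncls_sub; exact: open_sub. Qed.

Lemma k_le2 w e : (kcomp ends alpha (upd w e false) <= (kcomp ends alpha (upd w e true)).+1)%N.
Proof.
rewrite !kcompE; apply: (ncls_add1 (a := (ends e).1) (b := (ends e).2)).
- exact: open_rel_sym.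
- exact: open_sub.
- exact: open_split.
Qed.

Lemma k_eq w e : connect (orel (upd w e false)) (ends e).1 (ends e).2 ->
  kcomp ends alpha (upd w e false) = kcomp ends alpha (upd w e true).
Proof.
move=> cab; rewrite !kcompE; apply: ncls_eq => x y; apply/idP/idP.
- apply: connect_sub => u v H; apply: connect1; exact: open_sub.
- apply: connect_sub => u v /open_split /or3P [H|/andP [/eqP -> /eqP ->]|/andP [/eqP -> /eqP ->]].
  + exact: connect1.
  + exact: cab.
  + by rewrite (sym_connect_sym (@open_rel_sym _)).
Qed.

Lemma walk_connect (w : cfg) x y s : walk ends alpha x y s -> all (fun f => w f) s ->
  connect (orel w) x y.
Proof.
have sv : forall u v, same_vertex alpha u v -> connect (orel w) u v.
  move=> u v /orP [/eqP ->|wd]; first exact: connect0.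
  by apply: connect1; rewrite /open_rel wd orbT.
elim: s x => [|f s IH] x /=; first by move=> H _; exact: sv.
move=> H /andP [wf allw].
case/orP: H => /andP [s1 wk].
- apply: connect_trans (sv _ _ s1) _; apply: connect_trans (IH _ wk allw).
  by apply: connect1; apply/orP; left; apply/existsP; exists f; rewrite wf /joins !eqxx.
- apply: connect_trans (sv _ _ s1) _; apply: connect_trans (IH _ wk allw).
  apply: connect1; apply/orP; left; apply/existsP; exists f.
  by rewrite wf /joins !eqxx orbT.
Qed.

Variable Et : {set E}.
Local Notation A e := (Gamma_open_event ends alpha Et e).

Lemma gam_mono e (w w' : cfg) : (forall f, f \notin Et -> w f ==> w' f) ->
  w \in A e -> w' \in A e.
Proof.
move=> H; rewrite !inE => /existsP [n /existsP [t /and3P [ut ig allw]]].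
apply/existsP; exists n; apply/existsP; exists t; rewrite ut ig /=.
move: ig => /andP [_ /allP nE].
apply/allP => f ft; exact: implyP (H f (nE f ft)) (allP allw f ft).
Qed.

Lemma gam_conn e (w : cfg) : e \in Et -> w \in A e ->
  connect (orel (upd w e false)) (ends e).1 (ends e).2.
Proof.
move=> eE; rewrite inE => /existsP [n /existsP [t /and3P [ut /andP [wk /allP nE] allw]]].
apply: walk_connect wk _; apply/allP => f ft.
have fe : f != e by apply: contraNneq (nE f ft) => ->.
by rewrite ffunE (negbTE fe) (allP allw f ft).
Qed.

End GraphFK.

Local Open Scope ring_scope.

Section Num.
Variables (V E : finType) (ends : E -> V * V) (alpha : {set {set V}}) (R : realFieldType) (p q : R).
Hypotheses (p0 : 0 <= p) (p1 : p <= 1) (q0 : 0 < q).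
Local Notation cfg := {ffun E -> bool}.
Local Notation W := (FK_weight ends alpha p q).
Local Notation k := (kcomp ends alpha).
Local Notation pp := (pprime p q).

Definition Xw (w : cfg) e := \prod_(f | f != e) (if w f then p else 1 - p).

Lemma Xw_ge0 w e : 0 <= Xw w e.
Proof. by apply: prodr_ge0 => f _; case: (w f); rewrite ?subr_ge0. Qed.

Lemma Dq_gt0 : 0 < p + q * (1 - p).
Proof.
case: (eqVneq p 1) => [->|pn1]; first by rewrite subrr mulr0 addr0 ltr01.
have h : 0 < q * (1 - p) by apply: mulr_gt0 => //; rewrite subr_gt0 lt_neqAle pn1 p1.
exact: ltr_wpDl p0 h.
Qed.

Lemma W1E w e : W (upd w e true) = p * Xw w e * q ^+ k (upd w e true).
Proof.
rewrite /FK_weight /edge_weight (bigD1 e) //= upd_same; congr (_ * _ * _).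
by apply: eq_bigr => f fe; rewrite upd_other.
Qed.

Lemma W0E w e : W (upd w e false) = (1 - p) * Xw w e * q ^+ k (upd w e false).
Proof.
rewrite /FK_weight /edge_weight (bigD1 e) //= upd_same; congr (_ * _ * _).
by apply: eq_bigr => f fe; rewrite upd_other.
Qed.

Lemma W_ge0 w : 0 <= W w.
Proof.
rewrite /FK_weight /edge_weight; apply: mulr_ge0; last by apply: exprn_ge0; exact: ltW.
by apply: prodr_ge0 => f _; case: (w f); rewrite ?subr_ge0.
Qed.

Lemma pp01 : 0 <= pp <= 1.
Proof.
have D := Dq_gt0; rewrite /pprime; apply/andP; split; first by apply: divr_ge0 => //; exact: ltW.
by rewrite ler_pdivrMr // mul1r lerDl; apply: mulr_ge0; [exact: ltW | rewrite subr_ge0].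
Qed.

Lemma ppE : pp - p = p * (1 - p) * (1 - q) / (p + q * (1 - p)).
Proof. have D := Dq_gt0; rewrite /pprime; field; exact: lt0r_neq0. Qed.

Lemma one_m_ppE : 1 - pp = q * (1 - p) / (p + q * (1 - p)).
Proof. have D := Dq_gt0; rewrite /pprime; field; exact: lt0r_neq0. Qed.

Lemma nU1 (X a b : R) : 0 <= X -> q * a <= b ->
  (1 - pp) * (p * X * a) <= pp * ((1 - p) * X * b).
Proof.
move=> X0 hab; rewrite one_m_ppE /pprime; move: (p + q * (1 - p)) Dq_gt0 => D' D.
have c0 : 0 <= p * (1 - p) * X / D'.
  by apply: divr_ge0; [apply: mulr_ge0; [apply: mulr_ge0|]; rewrite ?subr_ge0 | exact: ltW].
have -> : q * (1 - p) / D' * (p * X * a) = (q * a) * (p * (1 - p) * X / D') by ring.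
have -> : p / D' * ((1 - p) * X * b) = b * (p * (1 - p) * X / D') by ring.
exact: ler_wpM2r.
Qed.

Lemma nL1 (X a b : R) : 0 <= X -> b <= q * a ->
  pp * ((1 - p) * X * b) <= (1 - pp) * (p * X * a).
Proof.
move=> X0 hab; rewrite one_m_ppE /pprime; move: (p + q * (1 - p)) Dq_gt0 => D' D.
have c0 : 0 <= p * (1 - p) * X / D'.
  by apply: divr_ge0; [apply: mulr_ge0; [apply: mulr_ge0|]; rewrite ?subr_ge0 | exact: ltW].
have -> : q * (1 - p) / D' * (p * X * a) = (q * a) * (p * (1 - p) * X / D') by ring.
have -> : p / D' * ((1 - p) * X * b) = b * (p * (1 - p) * X / D') by ring.
exact: ler_wpM2r.
Qed.

Lemma nU3 (X a b : R) : 0 <= X -> b <= a ->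
  p * ((1 - p) * X * b) <= (1 - p) * (p * X * a).
Proof.
move=> X0 hab.
have c0 : 0 <= p * (1 - p) * X by apply: mulr_ge0; [apply: mulr_ge0|]; rewrite ?subr_ge0.
have -> : p * ((1 - p) * X * b) = b * (p * (1 - p) * X) by ring.
have -> : (1 - p) * (p * X * a) = a * (p * (1 - p) * X) by ring.
exact: ler_wpM2r.
Qed.

Lemma nconn (X a : R) : p * X * a = p * (p * X * a + (1 - p) * X * a).
Proof. ring. Qed.

Lemma U1 w e : q <= 1 -> (1 - pp) * W (upd w e true) <= pp * W (upd w e false).
Proof.
move=> q1; rewrite W1E W0E; apply: nU1; first exact: Xw_ge0.
rewrite -exprS; apply: ler_wiXn2l => //; [exact: ltW | exact: k_le2].
Qed.

Lemma L1 w e : 1 <= q -> pp * W (upd w e false) <= (1 - pp) * W (upd w e true).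
Proof.
move=> q1; rewrite W1E W0E; apply: nL1; first exact: Xw_ge0.
rewrite -exprS; apply: ler_weXn2l => //; exact: k_le2.
Qed.

Lemma U3 w e : q <= 1 -> p * W (upd w e false) <= (1 - p) * W (upd w e true).
Proof.
move=> q1; rewrite W1E W0E; apply: nU3; first exact: Xw_ge0.
apply: ler_wiXn2l => //; [exact: ltW | exact: k_le1].
Qed.

Lemma Wconn w e : connect (open_rel ends alpha (upd w e false)) (ends e).1 (ends e).2 ->
  W (upd w e true) = p * (W (upd w e true) + W (upd w e false)).
Proof. by move=> c; rewrite W1E W0E (k_eq c); apply: nconn. Qed.

End Num.

Lemma prodP_full (E : finType) (R : realFieldType) (r : E -> R) (A : {set {ffun E -> bool}}) :
  prodP r A = \sum_(x : {ffun E -> bool}) (\prod_f wt r f (x f)) * (x \in A)%:R.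
Proof.
rewrite /prodP big_mkcond; apply: eq_bigr => x _.
by case: (x \in A); rewrite ?mulr1 ?mulr0.
Qed.

Lemma prodP_01 (E : finType) (R : realFieldType) (m : R) (A : {set {ffun E -> bool}}) :
  0 <= m <= 1 -> 0 <= prodP (fun _ => m) A <= 1.
Proof.
move=> m01; rewrite prodP_full.
rewrite -(@Rs_full _ _ (fun _ => m) (enum E) (fun x => (x \in A)%:R) [ffun => false] (enum_uniq _) (@mem_enum _ _)).
apply: Rs_bounds => // x; by case: (x \in A); rewrite ?ler01 ?lexx.
Qed.

Section Core.
Variables (V E : finType) (ends : E -> V * V) (alpha : {set {set V}}) (R : realFieldType) (p q : R).
Hypotheses (p0 : 0 <= p) (p1 : p <= 1) (q0 : 0 < q).
Variable Et : {set E}.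
Local Notation cfg := {ffun E -> bool}.
Local Notation W := (FK_weight ends alpha p q).
Local Notation pp := (pprime p q).
Local Notation A e := (Gamma_open_event ends alpha Et e).
Definition ind (B : {set cfg}) (x : cfg) : R := (x \in B)%:R.

Lemma ind_mono e : mono (ind (A e)).
Proof.
move=> w w' H; rewrite /ind; case: (boolP (w \in A e)) => wA.
- by rewrite (gam_mono (w := w)) // => f _; exact: H.
- by case: (w' \in A e); rewrite ?ler01 ?lexx.
Qed.

Lemma ind_dep e (s : seq E) : (forall f, f \notin Et -> f \in s) ->
  forall w x : cfg, (forall f, f \in s -> w f = x f) -> ind (A e) w = ind (A e) x.
Proof.
move=> sub w x H; rewrite /ind.
have H' : forall (u v : cfg), (forall f, f \in s -> u f = v f) -> u \in A e -> v \in A e.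
  by move=> u v Huv; apply: gam_mono => f fE; rewrite (Huv f (sub f fE)) implybb.
case: (boolP (w \in A e)) => wA; first by rewrite (H' w x H wA).
case: (boolP (x \in A e)) => xA //.
by move: wA; rewrite (H' x w _ xA) // => f fs; rewrite H.
Qed.

Lemma fiber_FK e (s : seq E) (m : R) w : 0 <= m <= 1 -> e \in Et -> e \notin s -> uniq s ->
  (forall f, f \notin Et -> f \in s) ->
  (forall f x, m * W (upd x f false) <= (1 - m) * W (upd x f true)) ->
  prodP (fun _ => m) (A e) * \sum_(x | sim s w x) (W (upd x e true) + W (upd x e false)) <=
  \sum_(x | sim s w x) ind (A e) x * (W (upd x e true) + W (upd x e false)).
Proof.
move=> m01 eE es us sub HW.
rewrite prodP_full.
apply: (@fiber_dom _ _ (fun x => W (upd x e true) + W (upd x e false)) m s w (ind (A e)) m01 us (@ind_mono e) (@ind_dep e s sub)).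
move=> f fs x; have fe : e != f by apply: contraNneq es => ->.
rewrite !(upd_comm _ _ _ fe) mulrDr mulrDr; apply: lerD; exact: HW.
Qed.

Lemma keyU1 (r pp0 P W1 W0 c : R) : r = pp0 - (pp0 - p) * P -> c = 1 -> W1 = p * (W1 + W0) ->
  (1 - r) * W1 - r * W0 <= (pp0 - p) * (P * (W1 + W0) - c * (W1 + W0)).
Proof.
move=> -> -> h.
have -> : forall r0, (1 - r0) * W1 - r0 * W0 = W1 - r0 * (W1 + W0) by move=> r0; ring.
rewrite {1}h le_eqVlt; apply/orP; left; apply/eqP; ring.
Qed.

Lemma keyU0 (r pp0 P W1 W0 c : R) : r = pp0 - (pp0 - p) * P -> c = 0 -> (1 - pp0) * W1 <= pp0 * W0 ->
  (1 - r) * W1 - r * W0 <= (pp0 - p) * (P * (W1 + W0) - c * (W1 + W0)).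
Proof.
move=> -> -> h; rewrite -subr_le0.
have -> : (1 - (pp0 - (pp0 - p) * P)) * W1 - (pp0 - (pp0 - p) * P) * W0 -
  (pp0 - p) * (P * (W1 + W0) - 0 * (W1 + W0)) = (1 - pp0) * W1 - pp0 * W0 by ring.
by rewrite subr_le0.
Qed.

Lemma keyL1 (r pp0 P W1 W0 c : R) : r = pp0 + (p - pp0) * P -> c = 1 -> W1 = p * (W1 + W0) ->
  r * W0 - (1 - r) * W1 <= (p - pp0) * (P * (W1 + W0) - c * (W1 + W0)).
Proof.
move=> -> -> h.
have -> : forall r0, r0 * W0 - (1 - r0) * W1 = r0 * (W1 + W0) - W1 by move=> r0; ring.
rewrite [X in _ - X]h le_eqVlt; apply/orP; left; apply/eqP; ring.
Qed.

Lemma keyL0 (r pp0 P W1 W0 c : R) : r = pp0 + (p - pp0) * P -> c = 0 -> pp0 * W0 <= (1 - pp0) * W1 ->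
  r * W0 - (1 - r) * W1 <= (p - pp0) * (P * (W1 + W0) - c * (W1 + W0)).
Proof.
move=> -> -> h; rewrite -subr_le0.
have -> : (pp0 + (p - pp0) * P) * W0 - (1 - (pp0 + (p - pp0) * P)) * W1 -
  (p - pp0) * (P * (W1 + W0) - 0 * (W1 + W0)) = pp0 * W0 - (1 - pp0) * W1 by ring.
by rewrite subr_le0.
Qed.

Lemma EtU (r : E -> R) e (s : seq E) : q <= 1 -> p <= pp -> e \in Et ->
  r e = pp - (pp - p) * prodP (fun _ => p) (A e) ->
  e \notin s -> uniq s -> (forall f, f \notin Et -> f \in s) -> CU W r s e.
Proof.
move=> q1 ppp eE hr es us sub w.
apply: (@le_trans _ _ (\sum_(x | sim s w x) (pp - p) * (prodP (fun _ => p) (A e) *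
   (W (upd x e true) + W (upd x e false)) - ind (A e) x * (W (upd x e true) + W (upd x e false))))).
  apply: ler_sum => x _; case: (boolP (x \in A e)) => xA.
  - apply: (keyU1 hr); [by rewrite /ind xA | exact: Wconn (gam_conn eE xA)].
  - apply: (keyU0 hr); [by rewrite /ind (negbTE xA) | exact: U1].
rewrite -big_distrr /= sumrB -big_distrr /=; apply: mulr_ge0_le0; first by rewrite subr_ge0.
rewrite subr_le0; apply: fiber_FK => //; first by rewrite p0 p1.
by move=> f x; apply: U3.
Qed.

Lemma EtL (r : E -> R) e (s : seq E) : 1 <= q -> pp <= p -> e \in Et ->
  r e = pp + (p - pp) * prodP (fun _ => pp) (A e) ->
  e \notin s -> uniq s -> (forall f, f \notin Et -> f \in s) -> CL W r s e.
Proof.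
move=> q1 ppp eE hr es us sub w.
apply: (@le_trans _ _ (\sum_(x | sim s w x) (p - pp) * (prodP (fun _ => pp) (A e) *
   (W (upd x e true) + W (upd x e false)) - ind (A e) x * (W (upd x e true) + W (upd x e false))))).
  apply: ler_sum => x _; case: (boolP (x \in A e)) => xA.
  - apply: (keyL1 hr); [by rewrite /ind xA | exact: Wconn (gam_conn eE xA)].
  - apply: (keyL0 hr); [by rewrite /ind (negbTE xA) | exact: L1].
rewrite -big_distrr /= sumrB -big_distrr /=; apply: mulr_ge0_le0; first by rewrite subr_ge0.
rewrite subr_le0; apply: fiber_FK => //; first exact: pp01.
by move=> f x; apply: L1.
Qed.

End Core.

Unset Implicit Arguments.
Theorem proposition3p2 (R : realFieldType) (V E : finType) (ends : E -> V * V)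
  (dG : {set V}) (alpha : {set {set V}}) (p q : R) (Et : {set E}) :
  graph_connected ends ->
  partition alpha dG ->
  0 <= p <= 1 -> 0 < q ->
  (forall e, e \in Et -> exists s : seq E, in_Gamma ends alpha Et e s) ->
  (p < pprime p q ->
     dominated (FK ends alpha p q)
       (prodP (fun e => pprime p q -
                 (if e \in Et then eps_tilde ends alpha Et p (pprime p q) e else 0)))) /\
  (pprime p q < p ->
     dominated
       (prodP (fun e => pprime p q +
                 (if e \in Et then eps_tilde ends alpha Et p (pprime p q) e else 0)))
       (FK ends alpha p q)).
Proof.
move=> _ _ /andP [p0 p1] q0 _.
pose a := [seq e <- enum E | e \in Et].
pose b := [seq e <- enum E | e \notin Et].
have uL : uniq (a ++ b).
  rewrite cat_uniq; apply/and3P; split; [exact: filter_uniq (enum_uniq _) | | exact: filter_uniq (enum_uniq _)].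
  by apply/hasPn => f; rewrite mem_filter => /andP [fE _]; rewrite mem_filter (negbTE fE).
have allL : forall f, f \in a ++ b.
  move=> f; rewrite mem_cat; case: (boolP (f \in Et)) => fE; [by rewrite mem_filter fE mem_enum | by rewrite orbC mem_filter fE mem_enum].
have subb : forall s : seq E, {subset b <= s} -> forall f, f \notin Et -> f \in s.
  by move=> s sub g gE; apply: (sub g); rewrite mem_filter gE mem_enum.
have pl1 : p != pprime p q -> p < 1.
  move=> hne; rewrite lt_neqAle p1 andbT; apply/eqP => pe; move: hne.
  by rewrite /pprime pe subrr mulr0 addr0 divr1 eqxx.
have Zpos : p < 1 -> 0 < \sum_(w : {ffun E -> bool}) FK_weight ends alpha p q w.
  move=> pl; have Ww0 : 0 < FK_weight ends alpha p q [ffun => false].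
    rewrite /FK_weight /edge_weight; apply: mulr_gt0; last exact: exprn_gt0.
    by apply: prodr_gt0 => f _; rewrite ffunE subr_gt0.
  rewrite (bigD1 [ffun => false]) //=; apply: (lt_le_trans Ww0); rewrite lerDl.
  by apply: sumr_ge0 => w _; exact: W_ge0.
have indA : forall A : {set {ffun E -> bool}}, increasing A -> mono (@ind E R A).
  move=> A incA w w' H; rewrite /ind; case: (boolP (w \in A)) => wA.
  - by rewrite (incA w w' wA H).
  - by case: (w' \in A); rewrite ?ler01 ?lexx.
have sumA : forall A : {set {ffun E -> bool}}, \sum_(w in A) FK_weight ends alpha p q w =
    \sum_w FK_weight ends alpha p q w * @ind E R A w.
  move=> A; rewrite big_mkcond; apply: eq_bigr => w _; rewrite /ind.
  by case: (w \in A); rewrite ?mulr1 ?mulr0.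
have sumR : forall (r : E -> R) A, \sum_w FK_weight ends alpha p q w * Rs r (a ++ b) (@ind E R A) w =
    prodP r A * \sum_w FK_weight ends alpha p q w.
  move=> r A; rewrite mulrC big_distrl; apply: eq_bigr => w _; congr (_ * _).
  by rewrite (Rs_full _ _ _ uL allL) prodP_full.
split.
- move=> hlt.
  have q1 : q <= 1.
    rewrite leNgt; apply/negP => q1.
    have : pprime p q - p <= 0.
      rewrite ppE //; apply: mulr_le0_ge0; last by rewrite invr_ge0; exact: ltW (Dq_gt0 p0 p1 q0).
      by apply: mulr_ge0_le0; [apply: mulr_ge0; rewrite ?subr_ge0 | rewrite subr_le0; exact: ltW].
    by rewrite subr_le0 leNgt hlt.
  have pl : p < 1 by apply: pl1; rewrite lt_eqF.
  pose r := fun e => pprime p q -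
                 (if e \in Et then eps_tilde ends alpha Et p (pprime p q) e else 0).
  have hrE : forall e, e \in Et -> r e = pprime p q - (pprime p q - p) *
      prodP (fun _ => p) (Gamma_open_event ends alpha Et e).
    move=> e eE; rewrite /r eE /eps_tilde min_l ?ger0_norm // ?subr_ge0; exact: ltW.
  have hrN : forall e, e \notin Et -> r e = pprime p q by move=> e eE; rewrite /r (negbTE eE) subr0.
  have [pp0 pp1] : 0 <= pprime p q /\ pprime p q <= 1 by apply/andP; exact: pp01.
  have r01 : forall e, 0 <= r e <= 1.
    move=> e; case: (boolP (e \in Et)) => eE; last by rewrite hrN // pp0 pp1.
    rewrite hrE //; have /andP [P0 P1] := @prodP_01 E R p (Gamma_open_event ends alpha Et e) (introT andP (conj p0 p1)).
    have hpos : 0 <= pprime p q - p by rewrite subr_ge0; exact: ltW hlt.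
    have h1 := mulr_ge0 hpos P0.
    have h2 : 0 <= (pprime p q - p) * (1 - prodP (fun _ => p) (Gamma_open_event ends alpha Et e)).
      by apply: mulr_ge0; [exact: hpos | rewrite subr_ge0].
    move: (prodP _ _) P0 P1 h1 h2 => P P0 P1 h1 h2.
    apply/andP; split; nra.
  have cond : condU (FK_weight ends alpha p q) r (a ++ b).
    apply: condU_cat => //.
    + apply: condU_pw => e eb x; rewrite hrN; last by move: eb; rewrite mem_filter => /andP [].
      exact: U1.
    + move=> e s ea es us sub; apply: (@EtU V E ends alpha R p q p0 p1 q0 Et r e s) => //; first exact: ltW.
      * by move: ea; rewrite mem_filter => /andP [].
      * by apply: hrE; move: ea; rewrite mem_filter => /andP [].
      * exact: subb.
  move=> A incA; rewrite /FK ler_pdivrMr; last exact: Zpos.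
  rewrite sumA -(sumR _ A); exact: (hybridU r01 uL (indA A incA) cond).
- move=> hlt.
  have q1 : 1 <= q.
    rewrite leNgt; apply/negP => q1.
    have : 0 <= pprime p q - p.
      rewrite ppE //; apply: divr_ge0; last exact: ltW (Dq_gt0 p0 p1 q0).
      by apply: mulr_ge0; [apply: mulr_ge0; rewrite ?subr_ge0 | rewrite subr_ge0; exact: ltW].
    by rewrite subr_ge0 leNgt hlt.
  have pl : p < 1 by apply: pl1; rewrite gt_eqF.
  pose r := fun e => pprime p q +
                 (if e \in Et then eps_tilde ends alpha Et p (pprime p q) e else 0).
  have hrE : forall e, e \in Et -> r e = pprime p q + (p - pprime p q) *
      prodP (fun _ => pprime p q) (Gamma_open_event ends alpha Et e).
    move=> e eE; rewrite /r eE /eps_tilde min_r ?ler0_norm ?opprB // ?subr_le0; exact: ltW.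
  have hrN : forall e, e \notin Et -> r e = pprime p q by move=> e eE; rewrite /r (negbTE eE) addr0.
  have [pp0 pp1] : 0 <= pprime p q /\ pprime p q <= 1 by apply/andP; exact: pp01.
  have r01 : forall e, 0 <= r e <= 1.
    move=> e; case: (boolP (e \in Et)) => eE; last by rewrite hrN // pp0 pp1.
    rewrite hrE //; have /andP [P0 P1] := @prodP_01 E R (pprime p q) (Gamma_open_event ends alpha Et e) (introT andP (conj pp0 pp1)).
    have hpos : 0 <= p - pprime p q by rewrite subr_ge0; exact: ltW hlt.
    have h1 := mulr_ge0 hpos P0.
    have h2 : 0 <= (p - pprime p q) * (1 - prodP (fun _ => pprime p q) (Gamma_open_event ends alpha Et e)).
      by apply: mulr_ge0; [exact: hpos | rewrite subr_ge0].
    move: (prodP _ _) P0 P1 h1 h2 => P P0 P1 h1 h2.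
    apply/andP; split; nra.
  have cond : condL (FK_weight ends alpha p q) r (a ++ b).
    apply: condL_cat => //.
    + apply: condL_pw => e eb x; rewrite hrN; last by move: eb; rewrite mem_filter => /andP [].
      exact: L1.
    + move=> e s ea es us sub; apply: (@EtL V E ends alpha R p q p0 p1 q0 Et r e s) => //; first exact: ltW.
      * by move: ea; rewrite mem_filter => /andP [].
      * by apply: hrE; move: ea; rewrite mem_filter => /andP [].
      * exact: subb.
  move=> A incA; rewrite /FK ler_pdivlMr; last exact: Zpos.
  rewrite sumA -(sumR _ A); exact: (hybridL r01 uL (indA A incA) cond).
Qed.
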